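(* Let $k$ be a commutative ring containing $1/2$ and let $R$ be a smooth commutative $k$-algebra such that $\mathrm{Der}_k(R)$ is free with a basis $\tau_1,\dots,\tau_n$ of pairwise commuting derivations, with dual basis $\omega_1,\dots,\omega_n$ of $\Omega^1_{R/k}$ (so $df=\sum_r\tau_r(f)\omega_r$). Let $g=(g^{ij}),g'=(g'^{ij})\in GL_n(R)$ be such that $\tau'_i=g^{ij}\tau_j$ pairwise commute and $\tau''_i=g'^{ij}\tau'_j$ pairwise commute; let $(\omega'_i)$, $(\omega''_i)$ be the bases of $\Omega^1_{R/k}$ dual to $(\tau'_i)$, $(\tau''_i)$. Let $A,A'\in GL_m(R)$. For a basis $(\sigma_i)$ of commuting derivations, $G\in GL_n(R)$ and $B\in GL_m(R)$ define (summation over repeated indices) $$G^{i\alpha\gamma}(\sigma;G,B)=G^{iq}\sigma_q\big((B^{-1})^{\alpha\mu}\big)B^{\mu\gamma},$$ $$H^{ij}(\sigma;G,B)=\sigma_j\big(G^{i\nu\nu}(\sigma;G,B)\big)+\tfrac12 G^{iq}\sigma_j\big((B^{-1})^{\mu\beta}\big)B^{\beta\gamma}\sigma_q\big((B^{-1})^{\gamma\nu}\big)B^{\nu\mu}.$$ Put $h^{ij}=H^{ij}(\tau;g,A)$, $h'^{ij}=H^{ij}(\tau';g',A')$, $h''^{ij}=H^{ij}(\tau;g'g,A'A)$, $g^{p\mu\mu}=G^{p\mu\mu}(\tau;g,A)$, $g'^{i\alpha\gamma}=G^{i\alpha\gamma}(\tau';g',A')$, and define for each $i$ the $1$-form $$\mathfrak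 a_i=g'^{ip}h^{pr}\omega_r+g^{p\mu\mu}\,dg'^{ip}+g'^{i\alpha\gamma}A^{\gamma\beta}\,d\big((A^{-1})^{\beta\alpha}\big)+h'^{ip}\omega'_p-h''^{ir}\omega_r.$$ Then $$\mathfrak a_i=\tfrac12\,\mathrm{tr}\big\{A'^{-1}\tau''_i(A')\,\tau''_r(A)A^{-1}-A'^{-1}\tau''_r(A')\,\tau''_i(A)A^{-1}\big\}\,\omega''_r.$$
   Context: $(B^{-1})^{\alpha\beta}$ is the $(\alpha,\beta)$ entry of $B^{-1}$; $\tau(A)$ for a matrix $A$ means entrywise application of the derivation $\tau$. Repeated indices are summed. *)

(* Defs.v *)
From HB Require Import structures.
From mathcomp Require Import all_boot all_order all_algebra.
Set Implicit Arguments. Unset Strict Implicit. Unset Printing Implicit Defensive.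
Import Order.TTheory GRing.Theory Num.Theory.
Local Open Scope ring_scope.

Section Defs.
Variables (k : comUnitRingType) (R : comUnitAlgType k).

Definition is_der (D : R -> R) : Prop :=
  [/\ forall x y, D (x + y) = D x + D y,
      forall x y, D (x * y) = D x * y + x * D y
    & forall (a : k) x, D (a *: x) = a *: D x].

Definition is_der_mod (M : lmodType R) (delta : R -> M) : Prop :=
  [/\ forall x y, delta (x + y) = delta x + delta y,
      forall x y, delta (x * y) = x *: delta y + y *: delta x
    & forall (a : k) x, delta (a *: x) = (a%:A : R) *: delta x].

Definition Rlinear (M N : lmodType R) (phi : M -> N) : Prop :=
  forall (a : R) u v, phi (a *: u + v) = a *: phi u + phi v.

(** (Omega, d) is the module of Kahler differentials Omega^1_{R/k}:
    d is a k-derivation, universal among k-derivations into R-modules. *)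
Definition is_kahler (Omega : lmodType R) (d : R -> Omega) : Prop :=
  is_der_mod d /\
  forall (M : lmodType R) (delta : R -> M), is_der_mod delta ->
    (exists phi : Omega -> M, Rlinear phi /\ forall x, phi (d x) = delta x) /\
    (forall phi1 phi2 : Omega -> M, Rlinear phi1 -> Rlinear phi2 ->
       (forall x, phi1 (d x) = phi2 (d x)) -> forall v, phi1 v = phi2 v).

Definition der_basis (n : nat) (tau : 'I_n -> R -> R) : Prop :=
  [/\ forall j, is_der (tau j),
      forall D, is_der D -> exists c : 'I_n -> R, forall x, D x = \sum_j c j * tau j x
    & forall c : 'I_n -> R, (forall x, \sum_j c j * tau j x = 0) -> forall j, c j = 0].

Definition commuting (n : nat) (tau : 'I_n -> R -> R) : Prop :=
  forall i j x, tau i (tau j x) = tau j (tau i x).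

Definition mod_basis (Omega : lmodType R) (n : nat) (omega : 'I_n -> Omega) : Prop :=
  (forall v, exists c : 'I_n -> R, v = \sum_r c r *: omega r) /\
  (forall c : 'I_n -> R, \sum_r c r *: omega r = 0 -> forall r, c r = 0).

(** omega is the basis of Omega^1 dual to the derivation basis tau:
    omega is a basis and df = sum_r tau_r(f) omega_r
    (equivalently <tau_i, omega_j> = delta_ij under Der = Hom(Omega^1, R)). *)
Definition dual_basis (Omega : lmodType R) (d : R -> Omega) (n : nat)
    (tau : 'I_n -> R -> R) (omega : 'I_n -> Omega) : Prop :=
  mod_basis omega /\ forall f, d f = \sum_r tau r f *: omega r.

Definition der_change (n : nat) (G : 'M[R]_n) (tau : 'I_n -> R -> R) : 'I_n -> R -> R :=
  fun i x => \sum_j G i j * tau j x.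

Definition Gcoef (n m : nat) (sigma : 'I_n -> R -> R) (G : 'M[R]_n) (B : 'M[R]_m)
    (i : 'I_n) (al ga : 'I_m) : R :=
  \sum_(q < n) \sum_(mu < m) G i q * sigma q (invmx B al mu) * B mu ga.

Definition Hcoef (n m : nat) (sigma : 'I_n -> R -> R) (G : 'M[R]_n) (B : 'M[R]_m)
    (i j : 'I_n) : R :=
  sigma j (\sum_(nu < m) Gcoef sigma G B i nu nu)
  + (2%:R)^-1 * \sum_(q < n) \sum_(mu < m) \sum_(be < m) \sum_(ga < m) \sum_(nu < m)
      G i q * sigma j (invmx B mu be) * B be ga * sigma q (invmx B ga nu) * B nu mu.

End Defs.

(* Main.v *)
Require Import Defs.
From HB Require Import structures.
From mathcomp Require Import all_boot all_order all_algebra ring.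
From Stdlib Require Import FunctionalExtensionality.
Import Order.TTheory GRing.Theory Num.Theory.
Local Open Scope ring_scope.
Set Implicit Arguments. Unset Strict Implicit. Unset Printing Implicit Defensive.

Section Aux.
Variables (k : comUnitRingType) (R : comUnitAlgType k).

Lemma der0 (D : R -> R) : is_der D -> D 0 = 0.
Proof. case=> hD _ _; have h := hD 0 0; rewrite addr0 in h.
by apply: (addrI (D 0)); rewrite addr0 -h. Qed.

Lemma derN (D : R -> R) : is_der D -> forall x, D (- x) = - D x.
Proof. move=> hD x; have h0 := der0 hD; case: hD => hD _ _.
by apply/eqP; rewrite -subr_eq0 opprK -hD addNr h0. Qed.

Lemma derB (D : R -> R) : is_der D -> forall x y, D (x - y) = D x - D y.
Proof. move=> hD x y; have hN := derN hD; case: hD => hD _ _; by rewrite hD hN. Qed.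

Lemma der_sum (D : R -> R) (I : Type) (r : seq I) (P : pred I) (F : I -> R) :
  is_der D -> D (\sum_(i <- r | P i) F i) = \sum_(i <- r | P i) D (F i).
Proof. move=> hD; have h0 := der0 hD; case: hD => hD _ _.
by elim/big_rec2: _ => // i y1 y2 _ <-; rewrite hD. Qed.

Lemma der1 (D : R -> R) : is_der D -> D 1 = 0.
Proof. case=> _ hM _; have := hM 1 1; rewrite !mul1r !mulr1 => h.
by apply: (addrI (D 1)); rewrite addr0 -h. Qed.

Lemma derM (D : R -> R) : is_der D -> forall x y, D (x * y) = D x * y + x * D y.
Proof. by case. Qed.

Lemma der_change_der n (G : 'M[R]_n) (s : 'I_n -> R -> R) i :
  (forall j, is_der (s j)) -> is_der (der_change G s i).
Proof.
move=> hs; rewrite /der_change; split.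
- move=> x y; rewrite -big_split /=; apply: eq_bigr => j _.
  by case: (hs j) => -> _ _; rewrite mulrDr.
- move=> x y; rewrite big_distrl big_distrr -big_split /=; apply: eq_bigr => j _.
  case: (hs j) => _ -> _; rewrite mulrDr mulrA; congr (_ + _).
  by rewrite mulrCA.
- move=> a x; rewrite scaler_sumr; apply: eq_bigr => j _.
  by case: (hs j) => _ _ ->; rewrite scalerAr.
Qed.

Lemma der_mapM (D : R -> R) m1 m2 m3 (X : 'M[R]_(m1, m2)) (Y : 'M[R]_(m2, m3)) :
  is_der D -> map_mx D (X *m Y) = map_mx D X *m Y + X *m map_mx D Y.
Proof.
move=> hD; apply/matrixP => i j; rewrite !mxE der_sum // -big_split /=.
apply: eq_bigr => l _; by rewrite derM // !mxE.
Qed.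

Lemma map_mxDer (D : R -> R) m1 m2 (X Y : 'M[R]_(m1, m2)) :
  is_der D -> map_mx D (X + Y) = map_mx D X + map_mx D Y.
Proof. by case=> hD _ _; apply/matrixP => i j; rewrite !mxE hD. Qed.

Lemma map_mxNer (D : R -> R) m1 m2 (X : 'M[R]_(m1, m2)) :
  is_der D -> map_mx D (- X) = - map_mx D X.
Proof. by move=> hD; apply/matrixP => i j; rewrite !mxE derN. Qed.

Lemma der_map1 (D : R -> R) m : is_der D -> map_mx D (1%:M : 'M[R]_m) = 0.
Proof.
move=> hD; apply/matrixP => i j; rewrite !mxE; case: (i == j) => /=.
  by rewrite der1. by rewrite der0.
Qed.

Lemma der_tr (D : R -> R) m (X : 'M[R]_m) : is_der D -> D (\tr X) = \tr (map_mx D X).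
Proof. by move=> hD; rewrite /mxtrace der_sum //; apply: eq_bigr => l _; rewrite mxE. Qed.

Lemma der_map_inv (D : R -> R) m (B : 'M[R]_m) : is_der D -> B \in unitmx ->
  map_mx D (invmx B) = - (invmx B *m map_mx D B *m invmx B).
Proof.
move=> hD hB.
have h : map_mx D B *m invmx B + B *m map_mx D (invmx B) = 0.
  by rewrite -der_mapM // mulmxV // der_map1.
have hh : invmx B *m map_mx D B *m invmx B + map_mx D (invmx B) = 0.
  by rewrite -mulmxA -(mulKmx hB (map_mx D (invmx B))) -mulmxDr h mulmx0.
by move/eqP: hh; rewrite addr_eq0 => /eqP ->; rewrite opprK.
Qed.

Definition aD (D : R -> R) m (B : 'M[R]_m) := map_mx D (invmx B) *m B.

Lemma aDE (D : R -> R) m (B : 'M[R]_m) : is_der D -> B \in unitmx ->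
  aD D B = - (invmx B *m map_mx D B).
Proof.
move=> hD hB; rewrite /aD der_map_inv // mulNmx -!mulmxA mulVmx // mulmx1 /=.
by [].
Qed.


Lemma map_mx_change n m (G : 'M[R]_n) (s : 'I_n -> R -> R) i (M : 'M[R]_m) :
  map_mx (der_change G s i) M = \sum_j G i j *: map_mx (s j) M.
Proof. by apply/matrixP => a b; rewrite !mxE summxE; apply: eq_bigr => j _; rewrite !mxE. Qed.

Lemma aD_change n m (G : 'M[R]_n) (s : 'I_n -> R -> R) i (B : 'M[R]_m) :
  aD (der_change G s i) B = \sum_j G i j *: aD (s j) B.
Proof. by rewrite /aD map_mx_change mulmx_suml; apply: eq_bigr => j _; rewrite scalemxAl. Qed.

Lemma Gent n m (s : 'I_n -> R -> R) (G : 'M[R]_n) (B : 'M[R]_m) i al ga :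
  Gcoef s G B i al ga = aD (der_change G s i) B al ga.
Proof.
rewrite /Gcoef /aD mxE exchange_big /=; apply: eq_bigr => mu _.
by rewrite !mxE big_distrl.
Qed.

Lemma Gtr n m (s : 'I_n -> R -> R) (G : 'M[R]_n) (B : 'M[R]_m) i :
  \sum_(nu < m) Gcoef s G B i nu nu = \tr (aD (der_change G s i) B).
Proof. by apply: eq_bigr => nu _; rewrite Gent. Qed.

Lemma Hform n m (s : 'I_n -> R -> R) (G : 'M[R]_n) (B : 'M[R]_m) i j :
  Hcoef s G B i j = s j (\tr (aD (der_change G s i) B))
    + (2%:R)^-1 * \tr (aD (s j) B *m aD (der_change G s i) B).
Proof.
rewrite /Hcoef Gtr; congr (_ + _ * _).
rewrite exchange_big /=; apply: eq_bigr => mu _.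
rewrite mxE.
rewrite [RHS](eq_bigr (fun ga => \sum_(be < m) \sum_(q < n) \sum_(nu < m)
   s j (invmx B mu be) * B be ga * (G i q * s q (invmx B ga nu) * B nu mu))); last first.
  move=> ga _; rewrite -Gent /Gcoef /aD mxE big_distrl /=; apply: eq_bigr => be _.
  rewrite mxE big_distrr /=; apply: eq_bigr => q _; by rewrite big_distrr.
rewrite [RHS]exchange_big /=.
rewrite exchange_big /=; apply: eq_bigr => be _.
rewrite exchange_big /=; apply: eq_bigr => ga _.
apply: eq_bigr => q _; apply: eq_bigr => nu _.
by ring.
Qed.

Lemma conv (V : lmodType R) (I : finType) n (c : I -> R) (e : I -> 'I_n -> R) (w : 'I_n -> V) :
  \sum_(x : I) c x *: \sum_(s < n) e x s *: w s = \sum_(s < n) (\sum_(x : I) c x * e x s) *: w s.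
Proof.
under eq_bigr => x _ do rewrite scaler_sumr.
rewrite exchange_big /=; apply: eq_bigr => s _.
by rewrite scaler_suml; apply: eq_bigr => x _; rewrite scalerA.
Qed.

Lemma sum_conv (V : lmodType R) (I : finType) n (f : I -> 'I_n -> R) (w : 'I_n -> V) :
  \sum_(x : I) \sum_(s < n) f x s *: w s = \sum_(s < n) (\sum_(x : I) f x s) *: w s.
Proof.
rewrite exchange_big /=; apply: eq_bigr => s _.
by rewrite scaler_suml.
Qed.

Lemma Rlin0 (M N : lmodType R) (phi : M -> N) : Rlinear phi -> phi 0 = 0.
Proof. move=> h; have := h 1 0 0; rewrite !scale1r addr0 => e.
by apply: (addrI (phi 0)); rewrite addr0 -e. Qed.

Lemma RlinD (M N : lmodType R) (phi : M -> N) : Rlinear phi -> forall u v, phi (u + v) = phi u + phi v.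
Proof. by move=> h u v; rewrite -{1}(scale1r u) h scale1r. Qed.

Lemma RlinZ (M N : lmodType R) (phi : M -> N) : Rlinear phi -> forall a u, phi (a *: u) = a *: phi u.
Proof. by move=> h a u; rewrite -(addr0 (a *: u)) h Rlin0 // addr0. Qed.

Lemma Rlin_sum (M N : lmodType R) (phi : M -> N) (I : Type) (r : seq I) (P : pred I) (F : I -> M) :
  Rlinear phi -> phi (\sum_(i <- r | P i) F i) = \sum_(i <- r | P i) phi (F i).
Proof. move=> h; elim/big_rec2: _ => [|i y1 y2 _ <-]; first exact: Rlin0.
by rewrite RlinD. Qed.

Lemma sum_delta n (f : 'I_n -> R) p : \sum_(r < n) (r == p)%:R * f r = f p.
Proof.
rewrite (bigD1 p) //= eqxx mul1r big1 ?addr0 // => r /negbTE ->; by rewrite mul0r.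
Qed.

Lemma dual_change (Omega : lmodType R) (d : R -> Omega) n (s s' : 'I_n -> R -> R)
  (psi psi' : 'I_n -> Omega) (G : 'M[R]_n) :
  is_kahler d -> (forall j, is_der (s j)) ->
  (forall c : 'I_n -> R, (forall x, \sum_j c j * s j x = 0) -> forall j, c j = 0) ->
  dual_basis d s psi -> dual_basis d s' psi' ->
  (forall t x, s' t x = \sum_p G t p * s p x) ->
  forall q, psi q = \sum_t G t q *: psi' t.
Proof.
move=> [hdm huniq] hs hind [_ hdpsi] [_ hdpsi'] hs' q.
pose delta : R -> 'rV[R]_n := fun x => \row_p s p x.
have hdelta : is_der_mod delta.
  split.
  - move=> x y; apply/rowP => p; rewrite !mxE; by case: (hs p) => -> _ _.
  - move=> x y; apply/rowP => p; rewrite !mxE; case: (hs p) => _ -> _.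
    by rewrite addrC mulrC [y * _]mulrC.
  - move=> a x; apply/rowP => p; rewrite !mxE; case: (hs p) => _ _ ->.
    by rewrite mulr_algl.
have [[phi [hphil hphid]] _] := huniq _ delta hdelta.
have hphipsi : forall r p, phi (psi r) 0 p = (r == p)%:R.
  move=> r p.
  have key : forall x, \sum_r (phi (psi r) 0 p - (r == p)%:R) * s r x = 0.
    move=> x; have := congr1 (fun v : 'rV[R]_n => v 0 p) (hphid x).
    rewrite hdpsi Rlin_sum // /delta mxE summxE => e.
    under eq_bigr => r0 _ do rewrite mulrBl.
    rewrite sumrB sum_delta -e; apply/eqP; rewrite subr_eq0; apply/eqP.
    apply: eq_bigr => r0 _; by rewrite RlinZ // mxE mulrC.
  by apply/eqP; rewrite -subr_eq0; apply/eqP; exact: (hind _ key r).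
pose Phi (v : Omega) := \sum_p phi v 0 p *: \sum_t G t p *: psi' t.
have hPhil : Rlinear Phi.
  move=> a u v; rewrite /Phi scaler_sumr -big_split /=; apply: eq_bigr => p _.
  by rewrite hphil !mxE scalerDl scalerA.
have hPhid : forall x, Phi (d x) = d x.
  move=> x; rewrite /Phi; under eq_bigr => p _ do rewrite hphid /delta mxE.
  rewrite conv hdpsi'; apply: eq_bigr => t _; rewrite hs'; congr (_ *: _).
  apply: eq_bigr => p _; by rewrite mulrC.
have hlinid : Rlinear (fun v : Omega => v) by [].
have := (huniq _ d hdm).2 Phi (fun v => v) hPhil hlinid hPhid (psi q).
rewrite /Phi => <-.
under eq_bigr => p _ do rewrite hphipsi.
rewrite (bigD1 q) //= eqxx scale1r [X in _ + X]big1 ?addr0 // => r /negbTE.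
by rewrite eq_sym => ->; rewrite scale0r.
Qed.

Lemma lin_H n m (G : 'M[R]_n) (s : 'I_n -> R -> R) t y (B : 'M[R]_m) Z (c : R) :
  \sum_r G t r * (s r y + c * \tr (aD (s r) B *m Z))
  = der_change G s t y + c * \tr (aD (der_change G s t) B *m Z).
Proof.
rewrite aD_change mulmx_suml raddf_sum mulr_sumr /der_change -big_split /=.
apply: eq_bigr => r _; rewrite -scalemxAl mxtraceZ; ring.
Qed.

Lemma lin_tr2 n m (G : 'M[R]_n) (s : 'I_n -> R -> R) t (B : 'M[R]_m) Y :
  \sum_r G t r * \tr (Y *m aD (s r) B) = \tr (Y *m aD (der_change G s t) B).
Proof.
rewrite aD_change mulmx_sumr raddf_sum /=; apply: eq_bigr => r _.
by rewrite -scalemxAr mxtraceZ.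
Qed.

Lemma lin_tr1 n m (G : 'M[R]_n) (s : 'I_n -> R -> R) t (B : 'M[R]_m) :
  \sum_r G t r * \tr (aD (s r) B) = \tr (aD (der_change G s t) B).
Proof.
rewrite aD_change raddf_sum /=; apply: eq_bigr => r _.
by rewrite mxtraceZ.
Qed.

Lemma trace_final m (A Ai Api P Q P' Q' : 'M[R]_m) (i2 : R) :
  A *m Ai = 1%:M -> 2%:R * i2 = 1 ->
  let a := - (Ai *m P) in let b := - (Ai *m Q) in
  let X := - (Api *m Q') in let Y := - (Api *m P') in
  i2 * \tr (a *m b) + \tr (X *m A *m (a *m Ai)) + i2 * \tr (Y *m X)
  - i2 * \tr ((Ai *m Y *m A + a) *m (Ai *m X *m A + b))
  = i2 * \tr (Api *m Q' *m P *m Ai - Api *m P' *m Q *m Ai).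
Proof.
move=> hAAi h2 a b X Y.
set t1 := \tr (Api *m Q' *m P *m Ai).
set t2 := \tr (Api *m P' *m Q *m Ai).
have e1 : \tr (X *m A *m (a *m Ai)) = t1.
  rewrite /X /a mulNmx mulNmx mulNmx mulmxN opprK.
  by rewrite !mulmxA -(mulmxA (Api *m Q') A Ai) hAAi mulmx1.
have e2 : \tr ((Ai *m Y *m A + a) *m (Ai *m X *m A + b))
   = \tr (Y *m X) + t2 + t1 + \tr (a *m b).
  rewrite mulmxDl !mulmxDr !mxtraceD -!addrA; congr (_ + _).
  - rewrite !mulmxA -(mulmxA _ A Ai) hAAi mulmx1 mxtrace_mulC !mulmxA.
    by rewrite hAAi mul1mx.
  congr (_ + _).
  - rewrite /Y /b ?mulmxN ?mulNmx ?mulmxN ?mulNmx ?opprK !mulmxA.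
    rewrite -(mulmxA (Ai *m Api *m P') A Ai) hAAi mulmx1.
    by rewrite -!mulmxA mxtrace_mulC !mulmxA.
  congr (_ + _).
  rewrite /a /X ?mulmxN ?mulNmx ?mulmxN ?mulNmx ?opprK !mulmxA.
  rewrite mxtrace_mulC !mulmxA hAAi mul1mx.
  by rewrite mxtrace_mulC !mulmxA mxtrace_mulC !mulmxA.
rewrite e1 e2 raddfB /= -/t1 -/t2.
apply/eqP; rewrite -subr_eq0.
have -> : i2 * \tr (a *m b) + t1 + i2 * \tr (Y *m X) -
  i2 * (\tr (Y *m X) + t2 + t1 + \tr (a *m b)) - i2 * (t1 - t2)
  = t1 * (1 - 2%:R * i2) by ring.
by rewrite h2 subrr mulr0.
Qed.

Lemma invmxM' m (A B : 'M[R]_m) : A \in unitmx -> B \in unitmx ->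
  invmx (A *m B) = invmx B *m invmx A.
Proof.
move=> hA hB; have hAB : A *m B \in unitmx by rewrite unitmx_mul hA hB.
have e : (A *m B) *m (invmx B *m invmx A) = 1%:M.
  by rewrite -mulmxA (mulmxA B) mulmxV // mul1mx mulmxV.
by rewrite -[LHS]mulmx1 -e mulmxA mulVmx // mul1mx.
Qed.

Lemma aD_prod (E : R -> R) m (A' A : 'M[R]_m) : is_der E -> A' \in unitmx -> A \in unitmx ->
  aD E (A' *m A) = invmx A *m aD E A' *m A + aD E A.
Proof.
move=> hE hA' hA; have hAB : A' *m A \in unitmx by rewrite unitmx_mul hA' hA.
rewrite !aDE // invmxM' // der_mapM // mulmxDr opprD mulmxN mulNmx !mulmxA.
by rewrite -(mulmxA (invmx A) (invmx A') A') mulVmx // mulmx1.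
Qed.
End Aux.

Theorem lemma5p5 (k : comUnitRingType) (R : comUnitAlgType k)
    (Omega : lmodType R) (d : R -> Omega) (n m : nat)
    (tau : 'I_n -> R -> R) (omega omega' omega'' : 'I_n -> Omega)
    (g g' : 'M[R]_n) (A A' : 'M[R]_m) :
  (2%:R : k) \is a GRing.unit ->
  is_kahler d ->
  der_basis tau -> commuting tau ->
  dual_basis d tau omega ->
  g \in unitmx -> g' \in unitmx ->
  commuting (der_change g tau) ->
  commuting (der_change g' (der_change g tau)) ->
  dual_basis d (der_change g tau) omega' ->
  dual_basis d (der_change g' (der_change g tau)) omega'' ->
  A \in unitmx -> A' \in unitmx ->
  let tau' := der_change g tau in
  let tau'' := der_change g' tau' in
  let h := Hcoef tau g A in
  let h' := Hcoef tau' g' A' in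
  let h'' := Hcoef tau (g' *m g) (A' *m A) in
  let gG := Gcoef tau g A in
  let g'G := Gcoef tau' g' A' in
  forall i : 'I_n,
    \sum_(p < n) \sum_(r < n) (g' i p * h p r) *: omega r
    + \sum_(p < n) \sum_(mu < m) gG p mu mu *: d (g' i p)
    + \sum_(al < m) \sum_(ga < m) \sum_(be < m)
        (g'G i al ga * A ga be) *: d (invmx A be al)
    + \sum_(p < n) h' i p *: omega' p
    - \sum_(r < n) h'' i r *: omega r
  = \sum_(r < n)
      ((2%:R)^-1 * \tr (invmx A' *m map_mx (tau'' i) A' *m map_mx (tau'' r) A *m invmx A
                        - invmx A' *m map_mx (tau'' r) A' *m map_mx (tau'' i) A *m invmx A))
      *: omega'' r.
Proof.
move=> h2 hK htau hcomm hdual hg hg' hc' hc'' hdual' hdual'' hA hA'.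
move=> tau' tau'' h h' h'' gG g'G i.
have [hder _ indt] := htau.
have hder' : forall j, is_der (tau' j) by move=> j; exact: der_change_der.
have hder'' : forall j, is_der (tau'' j) by move=> j; exact: der_change_der.
have htt : forall t x, tau'' t x = \sum_p (g' *m g) t p * tau p x.
  move=> t x; rewrite /tau'' /tau' /der_change.
  under eq_bigr => q _ do rewrite mulr_sumr.
  rewrite exchange_big /=; apply: eq_bigr => p _; rewrite mxE big_distrl /=.
  by apply: eq_bigr => q _; rewrite mulrA.
have hchg : der_change (g' *m g) tau = tau''.
  by apply: functional_extensionality => t; apply: functional_extensionality => x; rewrite htt.
have indt' : forall c : 'I_n -> R, (forall x, \sum_j c j * tau' j x = 0) -> forall j, c j = 0.
  move=> c hc.
  have hcg : forall j, \sum_p c p * g p j = 0.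
    apply: indt => x; rewrite -[RHS](hc x) /tau' /der_change.
    under [RHS]eq_bigr => j _ do rewrite mulr_sumr.
    rewrite [RHS]exchange_big /=; under eq_bigr => j _ do rewrite big_distrl /=.
    apply: eq_bigr => j _; apply: eq_bigr => p _; by rewrite mulrA.
  have hrow : (\row_p c p) *m g = 0.
    by apply/rowP => j; rewrite !mxE -[RHS](hcg j); apply: eq_bigr => p _; rewrite mxE.
  move=> j; have := congr1 (fun M => M *m invmx g) hrow.
  rewrite mul0mx -mulmxA mulmxV // mulmx1 => /rowP /(_ j); by rewrite !mxE.
have homega : forall r, omega r = \sum_t (g' *m g) t r *: omega'' t :=
  dual_change hK hder indt hdual hdual'' htt.
have homega' : forall p, omega' p = \sum_t g' t p *: omega'' t :=
  dual_change hK hder' indt' hdual' hdual'' (fun t x => erefl).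
have hd := hdual''.2.
have E1 : \sum_(p < n) \sum_(r < n) (g' i p * h p r) *: omega r
  = \sum_t (\sum_(p < n) \sum_(r < n) g' i p * h p r * (g' *m g) t r) *: omega'' t.
  rewrite -sum_conv; apply: eq_bigr => p _.
  under eq_bigr => r _ do rewrite homega.
  by rewrite conv.
have E2 : \sum_(p < n) \sum_(mu < m) gG p mu mu *: d (g' i p)
  = \sum_t (\sum_(p < n) (\sum_(mu < m) gG p mu mu) * tau'' t (g' i p)) *: omega'' t.
  under eq_bigr => p _ do rewrite -scaler_suml hd.
  by rewrite conv.
have E3 : \sum_(al < m) \sum_(ga < m) \sum_(be < m) (g'G i al ga * A ga be) *: d (invmx A be al)
  = \sum_t (\sum_(al < m) \sum_(ga < m) \sum_(be < m)
       g'G i al ga * A ga be * tau'' t (invmx A be al)) *: omega'' t.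
  rewrite -sum_conv; apply: eq_bigr => al _.
  rewrite -sum_conv; apply: eq_bigr => ga _.
  under eq_bigr => be _ do rewrite hd.
  by rewrite conv.
have E4 : \sum_(p < n) h' i p *: omega' p = \sum_t (\sum_(p < n) h' i p * g' t p) *: omega'' t.
  under eq_bigr => p _ do rewrite homega'.
  by rewrite conv.
have E5 : \sum_(r < n) h'' i r *: omega r = \sum_t (\sum_(r < n) h'' i r * (g' *m g) t r) *: omega'' t.
  under eq_bigr => r _ do rewrite homega.
  by rewrite conv.
rewrite E1 E2 E3 E4 E5 -!big_split -sumrB /=; apply: eq_bigr => t _.
rewrite -!scalerDl -scalerBl; congr (_ *: _).
have hu : (2%:R : R) \is a GRing.unit.
  by rewrite -(rmorph_nat (in_alg R)); apply: rmorph_unit.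
set i2 := (2%:R : R)^-1.
have h2R : 2%:R * i2 = 1 by rewrite /i2 mulrV.
have C1 : \sum_(p < n) \sum_(r < n) g' i p * h p r * (g' *m g) t r
  = \sum_(p < n) g' i p * (tau'' t (\tr (aD (tau' p) A))
        + i2 * \tr (aD (tau'' t) A *m aD (tau' p) A)).
  apply: eq_bigr => p _; rewrite -hchg -lin_H mulr_sumr; apply: eq_bigr => r _.
  rewrite /h Hform -/tau' -/i2; ring.
have C2 : \sum_(p < n) (\sum_(mu < m) gG p mu mu) * tau'' t (g' i p)
  = \sum_(p < n) \tr (aD (tau' p) A) * tau'' t (g' i p).
  by apply: eq_bigr => p _; rewrite /gG Gtr.
have C3 : \sum_(al < m) \sum_(ga < m) \sum_(be < m) g'G i al ga * A ga be * tau'' t (invmx A be al)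
  = \tr (aD (tau'' i) A' *m A *m map_mx (tau'' t) (invmx A)).
  rewrite /mxtrace; apply: eq_bigr => al _; rewrite mxE.
  under [RHS]eq_bigr => be _ do rewrite mxE big_distrl /=.
  rewrite [RHS]exchange_big /=; apply: eq_bigr => ga _; apply: eq_bigr => be _.
  by rewrite /g'G Gent !mxE.
have C4 : \sum_(p < n) h' i p * g' t p
  = tau'' t (\tr (aD (tau'' i) A')) + i2 * \tr (aD (tau'' t) A' *m aD (tau'' i) A').
  rewrite /tau'' -lin_H; apply: eq_bigr => p _; rewrite /h' Hform -/i2; ring.
have C5 : \sum_(r < n) h'' i r * (g' *m g) t r
  = tau'' t (\tr (aD (tau'' i) (A' *m A)))
    + i2 * \tr (aD (tau'' t) (A' *m A) *m aD (tau'' i) (A' *m A)).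
  rewrite -hchg -lin_H; apply: eq_bigr => r _; rewrite /h'' Hform -/i2; ring.
have C12 : \sum_(p < n) g' i p * (tau'' t (\tr (aD (tau' p) A))
        + i2 * \tr (aD (tau'' t) A *m aD (tau' p) A))
    + \sum_(p < n) \tr (aD (tau' p) A) * tau'' t (g' i p)
  = tau'' t (\tr (aD (tau'' i) A)) + i2 * \tr (aD (tau'' t) A *m aD (tau'' i) A).
  rewrite -(lin_tr1 g' tau' i A) -(lin_tr2 g' tau' i A (aD (tau'' t) A)).
  rewrite [tau'' t (\sum_(r < n) _)]der_sum // mulr_sumr -!big_split /=; apply: eq_bigr => p _.
  rewrite [tau'' t (_ * _)]derM //; ring.
rewrite C1 C2 C12 C3 C4 C5.
have hAAi : A *m invmx A = 1%:M by rewrite mulmxV.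
have trAXA : forall M : 'M[R]_m, \tr (invmx A *m M *m A) = \tr M.
  by move=> M; rewrite mxtrace_mulC mulmxA mulmxV // mul1mx.
have hDtr : tau'' t (\tr (aD (tau'' i) (A' *m A)))
    = tau'' t (\tr (aD (tau'' i) A')) + tau'' t (\tr (aD (tau'' i) A)).
  rewrite aD_prod // mxtraceD trAXA; by case: (hder'' t) => ->.
have hinv : map_mx (tau'' t) (invmx A) = - (invmx A *m map_mx (tau'' t) A) *m invmx A.
  by rewrite der_map_inv // mulNmx.
rewrite hDtr !aD_prod // hinv !aDE //.
have := trace_final (invmx A') (map_mx (tau'' t) A) (map_mx (tau'' i) A)
  (map_mx (tau'' t) A') (map_mx (tau'' i) A') hAAi h2R.
move=> /= <-; ring.
Qed.
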